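(* Let $n\ge 1$ and let $G$ be a random threshold graph on $n$ vertices. Then for every integer $k\ge 0$, $$P\big(h(\mathrm{seq}(G))=k\big)=\left(\tfrac12\right)^{n-1}\binom{n-1}{\left\lfloor \frac{n+k}{2}\right\rfloor}.$$
   Context: A threshold graph on $n\ge1$ vertices is built from a base vertex $v_0$ by successively adding $v_1,\dots,v_{n-1}$, each either isolated (adjacent to no earlier vertex) or dominating (adjacent to all earlier vertices); its creation sequence $\mathrm{seq}(G)=s_1\cdots s_{n-1}$ has $s_i=1$ if $v_i$ is dominating and $s_i=0$ otherwise, and each unlabeled threshold graph on $n$ vertices corresponds to exactly one binary string of length $n-1$. A random threshold graph on $n$ vertices is one whose creation sequence is uniformly distributed over all $2^{n-1}$ binary strings of length $n-1$ (equivalently, the graph obtained from $n$ independent uniform weights on $[0,1]$, joining two vertices iff their weights sum to more than $1$). For a binary string $s=s_1\cdots s_m$ and $0\le k\le m$, the $k$-th tail is $s_{m-k+1}\cdots s_m$ (the empty string for $k=0$); $z_k(s)$ and $u_k(s)$ denote the numbers of zeros and ones in the $k$-th tail. Define $h(s)=\max_{0\le k\le m}\{z_k(s)-u_k(s)\}$. *)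

(* Defs.v *)
From HB Require Import structures.
From mathcomp Require Import all_boot all_order all_algebra.
Set Implicit Arguments. Unset Strict Implicit. Unset Printing Implicit Defensive.
Import Order.TTheory GRing.Theory Num.Theory.

(* Binary strings are sequences of booleans: true = 1 (dominating), false = 0 (isolated). *)

Definition tail (s : seq bool) (k : nat) : seq bool := drop (size s - k) s.

Definition zk (s : seq bool) (k : nat) : nat := count (fun b => ~~ b) (tail s k).
Definition uk (s : seq bool) (k : nat) : nat := count id (tail s k).

(* h(s) = max_{0 <= k <= m} (z_k(s) - u_k(s)), as an integer. The initial value 0
   of the fold is harmless since the k = 0 term equals 0. *)
Definition h (s : seq bool) : int :=
  \big[Num.max/0%R]_(0 <= k < (size s).+1) ((zk s k)%:Z - (uk s k)%:Z)%R.

(* Probability, for a random threshold graph on n vertices (creation sequence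
   uniform over the 2^(n-1) binary strings of length n-1), that the creation
   sequence satisfies predicate P. *)
Definition prob_seq (n : nat) (P : seq bool -> bool) : rat :=
  ((#|[set t : (n.-1).-tuple bool | P (tval t)]|)%:R / (2 ^ n.-1)%:R)%R.

(* Main.v *)
Require Import Defs.
From mathcomp Require Import all_boot all_order all_algebra zify.
Import Order.TTheory GRing.Theory Num.Theory.

Lemma card_count (T : finType) (P : pred T) : #|P| = count P (enum T).
Proof. by rewrite enumT cardE /enum_mem size_filter. Qed.

Fixpoint allseq (m : nat) : seq (seq bool) :=
  if m is m'.+1 then [seq rcons s b | s <- allseq m', b <- [:: true; false]]
  else [:: [::]].

Lemma allseqS m : allseq m.+1 = [seq rcons s b | s <- allseq m, b <- [:: true; false]].
Proof. by []. Qed.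

Lemma allseqP m s : (s \in allseq m) = (size s == m).
Proof.
elim: m s => [|m IH] s.
  by rewrite inE; case: s.
rewrite allseqS; apply/idP/idP.
  by case/allpairsP => [[s' b] /= [Hs _ ->]]; rewrite size_rcons eqSS -IH.
case/lastP: s => [//|s b]; rewrite size_rcons eqSS -IH => Hs.
by apply/allpairsP; exists (s, b); split => //; case: b.
Qed.

Lemma allseq_uniq m : uniq (allseq m).
Proof.
elim: m => [//|m IH]; rewrite allseqS; apply: allpairs_uniq => //.
by move=> [s b] [s' b'] _ _ /= /rcons_inj.
Qed.

Lemma count_allseq (P : pred (seq bool)) m :
  count P (allseq m.+1) = (count (fun s => P (rcons s true)) (allseq m) +
                           count (fun s => P (rcons s false)) (allseq m))%N.
Proof.
rewrite /=; elim: (allseq m) => [//|s l IH] /=.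
rewrite IH; case: (P (rcons s true)); case: (P (rcons s false)) => /=; lia.
Qed.

Lemma card_tuple_count m (P : pred (seq bool)) :
  #|[set t : m.-tuple bool | P (tval t)]| = count P (allseq m).
Proof.
rewrite cardsE card_count -(count_map val P).
apply/permP/uniq_perm; first by rewrite map_inj_uniq ?enum_uniq //; apply: val_inj.
  exact: allseq_uniq.
move=> s; rewrite allseqP; apply/mapP/idP.
  by move=> [t _ ->]; rewrite size_tuple.
by move=> Hs; exists (Tuple Hs); rewrite ?mem_enum.
Qed.

Local Open Scope ring_scope.

Definition w (s : seq bool) (k : nat) : int := (zk s k)%:Z - (uk s k)%:Z.
Definition dd (b : bool) : int := if b then -1 else 1.

Lemma w0 s : w s 0 = 0.
Proof. by rewrite /w /zk /uk /tail subn0 drop_size. Qed.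

Lemma w_rcons s b k : (k <= size s)%N -> w (rcons s b) k.+1 = w s k + dd b.
Proof.
move=> Hk; rewrite /w /zk /uk /tail size_rcons subSS drop_rcons ?leq_subr //.
rewrite -cats1 !count_cat /=; case: b => /=; lia.
Qed.

Lemma h_ge0 s : 0 <= h s.
Proof. rewrite /h; elim/big_rec: _ => // i x _ Hx; by rewrite le_max Hx orbT. Qed.

Lemma aux1 (a b y d : int) : Num.max d a = Num.max 0 (b+d) -> Num.max d (Num.max (y+d) a) = Num.max 0 (Num.max y b + d).
Proof. lia. Qed.

Lemma aux2 (B1 B2 d : int) : Num.max d B1 = Num.max 0 (B2 + d) -> Num.max 0 (Num.max d B1) = Num.max 0 (Num.max 0 B2 + d).
Proof. lia. Qed.

Lemma bigmax_addr (r : seq nat) (F : nat -> int) (d : int) :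
  Num.max d (\big[Num.max/0]_(i <- r) (F i + d)) =
  Num.max 0 (\big[Num.max/0]_(i <- r) F i + d).
Proof.
elim: r => [|x r IH]; first by rewrite !big_nil; lia.
rewrite !big_cons; move: IH; apply: aux1.
Qed.

Lemma hE s : h s = \big[Num.max/0]_(0 <= k < (size s).+1) w s k.
Proof. by []. Qed.

Lemma h_rcons s b : h (rcons s b) = Num.max 0 (h s + dd b).
Proof.
rewrite !hE size_rcons big_nat_recl // w0.
under eq_big_nat => i /andP[_ Hi] do rewrite w_rcons //.
rewrite !big_nat_recl // w0 add0r /index_iota !subn0.
apply: aux2; exact: (bigmax_addr (iota 0 (size s)) (fun i => w s i.+1) (dd b)).
Qed.

Definition c m (k : nat) := count (fun s => h s == Posz k) (allseq m).

Lemma count_or (T : Type) (a b : pred T) l : (forall x, ~~ (a x && b x)) ->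
  count (fun x => a x || b x) l = (count a l + count b l)%N.
Proof.
move=> H; elim: l => [//|x l IH] /=; rewrite IH; have := H x.
case: (a x); case: (b x) => //= _; lia.
Qed.

Lemma c_step0 m : c m.+1 0 = (c m 0 + c m 1)%N.
Proof.
rewrite /c count_allseq.
rewrite (eq_count (a1 := fun s => h (rcons s false) == 0) (a2 := fun _ => false)); last first.
  move=> s /=; have := h_ge0 s; rewrite h_rcons /dd; lia.
rewrite count_pred0 addn0 -count_or; last first.
  by move=> s; case: eqP => //= ->.
apply: eq_count => s /=; have := h_ge0 s; rewrite h_rcons /dd; lia.
Qed.

Lemma c_stepS m j : c m.+1 j.+1 = (c m j.+2 + c m j)%N.
Proof.
rewrite /c count_allseq; congr (_ + _)%N; apply: eq_count => s /=;
have := h_ge0 s; rewrite h_rcons /dd; lia.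
Qed.

Lemma c_closed m k : c m k = 'C(m, (m + k + 1)./2).
Proof.
elim: m k => [|m IH] k.
  rewrite /c /= hE big_nat_recl // w0 big_geq //.
  rewrite maxxx; case: k => [|k] //.
  by rewrite bin0n; have -> : ((0 + k.+1 + 1)./2 = (k./2).+1)%N by lia.
case: k => [|j].
  rewrite c_step0 !IH.
  have -> : ((m.+1 + 0 + 1)./2 = (m./2).+1)%N by lia.
  have -> : ((m + 1 + 1)./2 = (m./2).+1)%N by lia.
  have -> : ((m + 0 + 1)./2 = m - m./2)%N by lia.
  rewrite binS bin_sub; first exact: addnC.
  lia.
rewrite c_stepS !IH.
have -> : ((m + j.+2 + 1)./2 = ((m + j + 1)./2).+1)%N by lia.
have -> : ((m.+1 + j.+1 + 1)./2 = ((m + j + 1)./2).+1)%N by lia.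
by rewrite binS addnC.
Qed.

Local Close Scope ring_scope.

Theorem mainTheorem2 (n k : nat) (hn : 1 <= n) :
  prob_seq n (fun s => h s == Posz k) =
  ((1 / 2 : rat) ^+ (n - 1) * ('C(n - 1, (n + k)./2))%:R)%R.
Proof.
case: n hn => [//|m] _.
rewrite /prob_seq /= (card_tuple_count m (fun s => h s == Posz k)) -/(c m k) c_closed subn1 /=.
have -> : (uphalf (m + k) = (m + k + 1)./2)%N by rewrite uphalfE addn1.
by rewrite natrX div1r exprVn mulrC.
Qed.
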